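(* A proper restriction semigroup $S$ is ultra proper if and only if its underlying right partial action $\circ$ is a partially defined action, that is, for all $s,t\in S/\sigma$ and $x\in P(S)$: $x\circ(st)$ is defined if and only if $x\circ s$ and $(x\circ s)\circ t$ are defined.
   Context: Restriction semigroup: algebra $(S,\cdot,{}^*,{}^+)$ with $(S,\cdot)$ a semigroup satisfying $xx^*=x$, $x^*y^*=y^*x^*$, $(xy^* )^*=x^*y^*$, $x^*y=y(xy)^*$, $x^+x=x$, $x^+y^+=y^+x^+$, $(x^+y)^+=x^+y^+$, $xy^+=(xy)^+x$, $(x^+)^*=x^+$, $(x^* )^+=x^*$. $P(S)=\{x^*\}$; $\sigma$ the least congruence identifying all projections; $S$ proper if ($a^*=b^*$, $a\sigma b$) or ($a^+=b^+$, $a\sigma b$) imply $a=b$. Underlying left partial action of $S/\sigma$ on $P(S)$: $t\cdot e$ is defined iff there is $a\in t$ with $a^*\ge e$, and then $t\cdot e=(ae)^+$. Underlying right partial action: $e\circ t$ is defined iff $e=t\cdot f$ for some $f$, and then $e\circ t=f$. A left partial action $\cdot$ is a partially defined action if for all $s,t,x$: $(st)\cdot x$ is defined iff $t\cdot x$ and $s\cdot(t\cdot x)$ are defined. $S$ is ultra proper if it is proper and its underlying left partial action is a partially defined action. *)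

(* Defs.v *)
Record restriction_semigroup := RestrictionSemigroup {
  carrier :> Type;
  mul : carrier -> carrier -> carrier;
  star : carrier -> carrier;
  plus : carrier -> carrier;
  mulA : forall x y z, mul x (mul y z) = mul (mul x y) z;
  ax_xstar : forall x, mul x (star x) = x;
  ax_star_comm : forall x y, mul (star x) (star y) = mul (star y) (star x);
  ax_star_mul : forall x y, star (mul x (star y)) = mul (star x) (star y);
  ax_star_ample : forall x y, mul (star x) y = mul y (star (mul x y));
  ax_plusx : forall x, mul (plus x) x = x;
  ax_plus_comm : forall x y, mul (plus x) (plus y) = mul (plus y) (plus x);
  ax_plus_mul : forall x y, plus (mul (plus x) y) = mul (plus x) (plus y);
  ax_plus_ample : forall x y, mul x (plus y) = mul (plus (mul x y)) x;
  ax_star_plus : forall x, star (plus x) = plus x;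
  ax_plus_star : forall x, plus (star x) = star x
}.

Section Defs.
Variable S : restriction_semigroup.
Local Notation "x * y" := (mul S x y).

Definition is_proj (e : S) : Prop := exists x : S, e = star S x.

Definition proj_le (e f : S) : Prop := e = e * f.

Definition is_congruence (R : S -> S -> Prop) : Prop :=
  (forall a, R a a) /\ (forall a b, R a b -> R b a) /\
  (forall a b c, R a b -> R b c -> R a c) /\
  (forall a b c d, R a b -> R c d -> R (a * c) (b * d)) /\
  (forall a b, R a b -> R (star S a) (star S b)) /\
  (forall a b, R a b -> R (plus S a) (plus S b)).

Definition sigma (a b : S) : Prop :=
  forall R : S -> S -> Prop, is_congruence R ->
    (forall e f, is_proj e -> is_proj f -> R e f) -> R a b.

(** The sigma-class [a] of a, an element of S/sigma (a subset of S).
    Every element of S/sigma is of this form, and [a][b] = [ab]. *)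
Definition cls (a : S) : S -> Prop := fun b => sigma a b.

Definition proper : Prop :=
  (forall a b : S, star S a = star S b -> sigma a b -> a = b) /\
  (forall a b : S, plus S a = plus S b -> sigma a b -> a = b).

(** Underlying left partial action of S/sigma on P(S).
    [left_def t e]: t . e is defined;
    [left_act t e f]: t . e is defined and equals f. *)
Definition left_def (t : S -> Prop) (e : S) : Prop :=
  exists a, t a /\ proj_le e (star S a).

Definition left_act (t : S -> Prop) (e f : S) : Prop :=
  exists a, t a /\ proj_le e (star S a) /\ f = plus S (a * e).

(** Underlying right partial action: e o t is defined iff e = t . f for
    some projection f, and then e o t = f.
    [right_act e t f]: e o t is defined and equals f. *)
Definition right_act (e : S) (t : S -> Prop) (f : S) : Prop :=
  is_proj f /\ left_act t f e.

Definition right_def (e : S) (t : S -> Prop) : Prop :=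
  exists f, right_act e t f.

Definition ultra_proper : Prop :=
  proper /\
  forall a b x : S, is_proj x ->
    (left_def (cls (a * b)) x <->
     exists y, left_act (cls b) x y /\ left_def (cls a) y).

Definition right_partially_defined : Prop :=
  forall a b x : S, is_proj x ->
    (right_def x (cls (a * b)) <->
     exists y, right_act x (cls a) y /\ right_def y (cls b)).

End Defs.

(* Main.v *)
Require Import Defs.

Section L.
Variable S : restriction_semigroup.
Local Notation "x * y" := (mul S x y).
Local Notation st := (star S).
Local Notation pl := (plus S).

Lemma star_idem x : st (st x) = st x.
Proof. rewrite <- (ax_plus_star S x). rewrite ax_star_plus. reflexivity. Qed.

Lemma pj e : is_proj S e -> st e = e /\ pl e = e.
Proof. intros [x ->]. split. apply star_idem. apply ax_plus_star. Qed.

Lemma proj_pl x : is_proj S (pl x).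
Proof. exists (pl x). symmetry. apply ax_star_plus. Qed.

Lemma proj_comm e f : is_proj S e -> is_proj S f -> e * f = f * e.
Proof. intros [x ->] [y ->]. apply ax_star_comm. Qed.

Lemma starmul u v : st (u * v) = st (st u * v).
Proof.
  rewrite ax_star_ample. rewrite ax_star_mul.
  assert (H : st (u * v) = st (u * v) * st v).
  { rewrite <- ax_star_mul. rewrite <- mulA. rewrite ax_xstar. reflexivity. }
  rewrite ax_star_comm. exact H.
Qed.

Lemma plusmul u v : pl (u * v) = pl (u * pl v).
Proof.
  rewrite ax_plus_ample. rewrite ax_plus_mul.
  assert (H : pl (u * v) = pl u * pl (u * v)).
  { rewrite <- ax_plus_mul. rewrite mulA. rewrite ax_plusx. reflexivity. }
  transitivity (pl u * pl (u * v)); [exact H | apply ax_plus_comm].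
Qed.

Lemma star_proj_mul u e : is_proj S e -> st (u * e) = st u * e.
Proof. intros [x ->]. apply ax_star_mul. Qed.

Lemma sigma_refl a : sigma S a a.
Proof. intros R [H _] _. apply H. Qed.
Lemma sigma_sym a b : sigma S a b -> sigma S b a.
Proof. intros H R HR Hp. pose proof HR as (_ & Hs & _). apply Hs, H; auto. Qed.
Lemma sigma_mul a b c d : sigma S a b -> sigma S c d -> sigma S (a * c) (b * d).
Proof. intros H1 H2 R HR Hp. pose proof HR as (_ & _ & _ & Hm & _).
  apply Hm; [apply H1|apply H2]; auto. Qed.
Lemma sigma_proj e f : is_proj S e -> is_proj S f -> sigma S e f.
Proof. intros He Hf R _ Hp. apply Hp; auto. Qed.

Lemma comp a b g : is_proj S g -> proj_le S g (st b) ->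
  proj_le S (pl (b * g)) (st a) ->
  proj_le S g (st (a * b)) /\ pl ((a * b) * g) = pl (a * pl (b * g)).
Proof.
  intros Hg Hgb Hy. unfold proj_le in *.
  set (y := pl (b * g)) in *.
  assert (Py : is_proj S y) by apply proj_pl.
  split.
  - assert (E : st ((a * b) * g) = g).
    { rewrite <- mulA. rewrite <- (ax_plusx S (b * g)). fold y.
      rewrite (mulA S a y (b * g)). rewrite (starmul (a * y) (b * g)).
      rewrite (star_proj_mul a y Py).
      rewrite (proj_comm (st a) y) by (auto; exists a; auto).
      rewrite <- Hy. unfold y. rewrite ax_plusx.
      rewrite (star_proj_mul b g Hg). rewrite (proj_comm (st b) g) by (auto; exists b; auto).
      symmetry; exact Hgb. }
    rewrite (star_proj_mul _ g Hg) in E.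
    rewrite proj_comm in E by (auto; exists (a * b); auto).
    symmetry; exact E.
  - rewrite <- mulA. apply plusmul.
Qed.

Lemma func c d f : proper S -> sigma S c d -> is_proj S f ->
  proj_le S f (st c) -> proj_le S f (st d) -> pl (c * f) = pl (d * f).
Proof.
  intros [P1 _] Hcd Hf H1 H2. f_equal. apply P1.
  - rewrite !(star_proj_mul _ f Hf).
    rewrite (proj_comm (st c) f) by (auto; exists c; auto).
    rewrite (proj_comm (st d) f) by (auto; exists d; auto).
    unfold proj_le in *. congruence.
  - apply sigma_mul; auto. apply sigma_refl.
Qed.

Lemma inj c d x g : proper S -> sigma S c d -> is_proj S x -> is_proj S g ->
  proj_le S x (st c) -> proj_le S g (st d) -> pl (c * x) = pl (d * g) -> x = g.
Proof.
  intros [_ P2] Hcd Hx Hg H1 H2 E.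
  assert (cx : c * x = d * g).
  { apply P2; auto. apply sigma_mul; auto. apply sigma_proj; auto. }
  assert (A : st (c * x) = x).
  { rewrite (star_proj_mul _ x Hx). rewrite proj_comm by (auto; exists c; auto).
    symmetry; exact H1. }
  assert (B : st (d * g) = g).
  { rewrite (star_proj_mul _ g Hg). rewrite proj_comm by (auto; exists d; auto).
    symmetry; exact H2. }
  congruence.
Qed.

Lemma sigma_trans a b c : sigma S a b -> sigma S b c -> sigma S a c.
Proof. intros H1 H2 R HR Hp. pose proof HR as (_ & _ & Ht & _).
  apply (Ht a b c); [apply H1|apply H2]; auto. Qed.

End L.

Theorem lemma3p9 (S : restriction_semigroup) :
  proper S -> (ultra_proper S <-> right_partially_defined S).
Proof.
  intros Pr. split.
  - intros [_ UL] a b x Hx. split.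
    + intros (f & Hf & c & Hc & Hfc & Ex).
      destruct (proj1 (UL a b f Hf) (ex_intro _ c (conj Hc Hfc)))
        as (y & (b' & Hb' & Hfb & Ey) & (a' & Ha' & Hya)).
      subst y.
      destruct (comp S a' b' f Hf Hfb Hya) as [C1 C2].
      exists (plus S (mul S b' f)). split.
      * split. apply proj_pl. exists a'. repeat split; auto.
        rewrite Ex, <- C2. apply func; auto.
        unfold cls in *. eapply sigma_trans; [apply sigma_sym; exact Hc|].
        apply sigma_mul; auto.
      * exists f. split; auto. exists b'. auto.
    + intros (y & (Py & a' & Ha' & Hya & Ex) & g & Pg & b' & Hb' & Hgb & Ey).
      subst y. destruct (comp S a' b' g Pg Hgb Hya) as [C1 C2].
      exists g. split; auto. exists (mul S a' b'). repeat split; auto.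
      unfold cls in *. apply sigma_mul; auto. rewrite Ex, C2. reflexivity.
  - intros R. split; [exact Pr|]. intros a b x Hx. split.
    + intros (c & Hc & Hxc).
      destruct (proj1 (R a b (plus S (mul S c x)) (proj_pl S _)))
        as (y & (Py & a' & Ha' & Hya & Ez) & g & Pg & b' & Hb' & Hgb & Ey).
      { exists x. split; auto. exists c. auto. }
      subst y. destruct (comp S a' b' g Pg Hgb Hya) as [C1 C2].
      assert (xg : x = g).
      { eapply (inj S c (mul S a' b')); eauto.
        unfold cls in *. eapply sigma_trans; [apply sigma_sym; exact Hc|].
        apply sigma_mul; auto.
        rewrite C2. exact Ez. }
      subst g. exists (plus S (mul S b' x)). split.
      * exists b'. auto.
      * exists a'. auto.
    + intros (y & (b' & Hb' & Hxb & Ey) & (a' & Ha' & Hya)). subst y.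
      destruct (comp S a' b' x Hx Hxb Hya) as [C1 C2].
      exists (mul S a' b'). split; auto.
      unfold cls in *. apply sigma_mul; auto.
Qed.
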